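(* Let $N\ge 1$. For each instance $i\in\{1,\dots,N\}$ let $r_i\in\{0,1\}$ be a binary label and $y_i\in\mathbb{R}$ a current prediction, and put $\psi_i=\frac{e^{y_i}}{e^{y_i}+e^{-y_i}}$. Let the logistic loss be $\ell(y_i)=-r_i\ln\psi_i-(1-r_i)\ln(1-\psi_i)$, with first and second derivatives $g_i=\ell'(y_i)=2(\psi_i-r_i)$ and $h_i=\ell''(y_i)=4\psi_i(1-\psi_i)>0$. Let $p_i\in(0,1]$ and $q_i\in\{0,1\}$ for each $i$, and let $\mathbf{Q}=\mathrm{diag}\left(\frac{q_1}{p_1},\dots,\frac{q_N}{p_N}\right)$, $\mathbf{H}=\mathrm{diag}(h_1,\dots,h_N)$, $\mathbf{g}=(g_1,\dots,g_N)^\top$. Then, with $(\mathbf{H}\mathbf{Q})^{-1}$ understood as the inverse on the sampled coordinates $\{i: q_i=1\}$ (i.e. the Moore--Penrose pseudo-inverse of the diagonal matrix $\mathbf{H}\mathbf{Q}$), $$\mathbf{g}^\top\mathbf{Q}(\mathbf{H}\mathbf{Q})^{+}\mathbf{Q}\mathbf{g}=\sum_{i:\,q_i=1}\frac{\left(\frac{q_ig_i}{p_i}\right)^2}{\frac{q_ih_i}{p_i}}\;\ge\;\sum_{i=1}^N\frac{q_i}{p_i}\,\ell(y_i).$$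
   Context: This is the setting of gradient tree boosting with logistic loss (LogitBoost) combined with importance sampling: on each boosting iteration, instance $i$ is included in the subsample independently with probability $p_i$, and $q_i\in\{0,1\}$ is the indicator that it was sampled. The importance-balanced (reweighted) loss is $L(\mathbf{y})=\sum_i \frac{q_i}{p_i}\ell(y_i)$. *)

(* Defs.v *)
From HB Require Import structures.
From mathcomp Require Import all_boot all_order all_algebra.
From mathcomp Require Import all_classical all_reals all_analysis.
Set Implicit Arguments. Unset Strict Implicit. Unset Printing Implicit Defensive.
Import Order.TTheory GRing.Theory Num.Theory.
Local Open Scope ring_scope.

Section LogitDefs.
Variable R : realType.

Definition psi (y : R) : R := expR y / (expR y + expR (- y)).

Definition logloss (r y : R) : R :=
  - r * ln (psi y) - (1 - r) * ln (1 - psi y).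

Definition lgrad (r y : R) : R := 2 * (psi y - r).

Definition lhess (y : R) : R := 4 * psi y * (1 - psi y).

Definition pinv_diag (n : nat) (A : 'M[R]_n) : 'M[R]_n :=
  diag_mx (\row_i (if A i i == 0 then 0 else (A i i)^-1)).

End LogitDefs.

(* Main.v *)
Require Import Defs.
From HB Require Import structures.
From mathcomp Require Import all_boot all_order all_algebra.
From mathcomp Require Import all_classical all_reals all_analysis.
From mathcomp Require Import ring lra.
Import Order.TTheory GRing.Theory Num.Theory.
Local Open Scope ring_scope.

Lemma psi_bounds (R : realType) (y : R) : 0 < psi y < 1.
Proof.
rewrite /psi; have e1 := expR_gt0 y; have e2 := expR_gt0 (-y).
apply/andP; split; first by rewrite divr_gt0 // addr_gt0.
by rewrite ltr_pdivrMr ?addr_gt0 // mul1r ltrDl.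
Qed.

Lemma ln_le_sub1 (R : realType) (t : R) : 0 < t -> ln t <= t - 1.
Proof.
move=> t0; have := expR_ge1Dx (ln t); rewrite lnK ?posrE //.
by rewrite -lerBrDl.
Qed.

Lemma mlnle (R : realType) (s : R) : 0 < s -> - ln s <= s^-1 - 1.
Proof.
move=> s0; rewrite -lnV ?posrE //; apply: ln_le_sub1; by rewrite invr_gt0.
Qed.

Lemma loss_le (R : realType) (r y : R) : (r = 0 \/ r = 1) ->
  logloss r y <= lgrad r y ^+ 2 / lhess y.
Proof.
rewrite /logloss /lgrad /lhess; have /andP[s0 s1] := psi_bounds _ y.
set s := psi y.
have s1' : 0 < 1 - s by rewrite subr_gt0.
have ls0 := mlnle _ _ s0. have ls1 := mlnle _ _ s1'.
case=> ->.
- have -> : (2 * (s - 0)) ^+ 2 / (4 * s * (1 - s)) = (1 - s)^-1 - 1.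
    by field; rewrite ?gt_eqF //; lra.
  lra.
- have -> : (2 * (s - 1)) ^+ 2 / (4 * s * (1 - s)) = s^-1 - 1.
    by field; rewrite ?gt_eqF //; lra.
  lra.
Qed.

Theorem lemma3 (R : realType) (N : nat) (hN : (0 < N)%N)
  (r y p q : 'I_N -> R)
  (hr : forall i, r i = 0 \/ r i = 1)
  (hp : forall i, 0 < p i <= 1)
  (hq : forall i, q i = 0 \/ q i = 1) :
  let g : 'cV[R]_N := \col_i lgrad (r i) (y i) in
  let Q : 'M[R]_N := diag_mx (\row_i (q i / p i)) in
  let H : 'M[R]_N := diag_mx (\row_i lhess (y i)) in
  let mid := \sum_(i < N | q i == 1)
               (q i * lgrad (r i) (y i) / p i) ^+ 2 / (q i * lhess (y i) / p i) in
  (g^T *m Q *m pinv_diag (H *m Q) *m Q *m g) ord0 ord0 = mid /\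
  \sum_(i < N) q i / p i * logloss (r i) (y i) <= mid.
Proof.
move=> g Q H mid.
have hpos i : 0 < p i by case/andP: (hp i).
have hh i : 0 < lhess (y i).
  rewrite /lhess; have /andP[a b] := psi_bounds _ (y i).
  have c : 0 < 1 - psi (y i) by rewrite subr_gt0.
  by apply: mulr_gt0 => //; apply: mulr_gt0.
split.
- rewrite /pinv_diag /H /Q mulmx_diag !mul_mx_diag mxE /mid [RHS]big_mkcond /=.
  apply: eq_bigr => i _; rewrite !mxE eqxx mulr1n.
  case: (hq i) => ->.
  + by rewrite (eq_sym 0) oner_eq0 !mul0r !mulr0 mul0r.
  + rewrite eqxx !mul1r.
    have hn : lhess (y i) * (p i)^-1 != 0 by rewrite mulf_neq0 ?invr_eq0 ?gt_eqF.
    rewrite (negbTE hn).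
    by field; rewrite ?gt_eqF.
- rewrite /mid [X in _ <= X]big_mkcond /=; apply: ler_sum => i _.
  case: (hq i) => ->.
  + by rewrite (eq_sym 0) oner_eq0 !mul0r.
  + rewrite eqxx !mul1r.
    have -> : (lgrad (r i) (y i) / p i) ^+ 2 / (lhess (y i) / p i) =
      (p i)^-1 * (lgrad (r i) (y i) ^+ 2 / lhess (y i)).
      by field; rewrite ?gt_eqF.
    by rewrite ler_wpM2l ?invr_ge0 ?(ltW (hpos i)) //; apply: loss_le.
Qed.
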